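(* Let $f$ be a stable update function. For every $0<\varepsilon_0\le 1/256$ there exists $\varepsilon>0$ such that, for every configuration $\mathcal U^{(t)}$ of $n$ opinions in $\mathbb S^{d-1}$ and every configuration $\mathcal U^{(t+1)}$ obtained from it by a single interaction: if $\mathcal U^{(t)}$ is $\varepsilon$-inactive, then $\mathcal U^{(t+1)}$ is $\varepsilon_0$-inactive, and the clusters of $\mathcal U^{(t)}$ (with parameter $\varepsilon$) coincide with the clusters of $\mathcal U^{(t+1)}$ (with parameter $\varepsilon_0$).
   Context: Opinions are unit vectors in $\mathbb R^d$; a configuration is an $n$-tuple, $A_{ij}=\langle\vec u_i,\vec u_j\rangle$. An interaction $(i,j)$, $i\ne j$, replaces $\vec u_i$ by $\vec w/\|\vec w\|$ with $\vec w=\vec u_i+f(A_{ij})\vec u_j$, leaving others unchanged. $f:[-1,1]\to\mathbb R$ is stable if continuous and $\operatorname{sign}f(A)=\operatorname{sign}A$ for all $A$. A configuration is $\varepsilon$-inactive if for all $i,j$, $|A_{ij}|\le\varepsilon$ or $|A_{ij}|\ge1-\varepsilon$. For an $\varepsilon$-inactive configuration, a nonempty $C\subseteq[n]$ is a cluster if $|A_{ij}|\ge1-\varepsilon$ for all $i,j\in C$ and $|A_{ij}|\le\varepsilon$ for all $i\in C$, $j\notin C$; for $\varepsilon\le1/256$ the clusters form a unique partition of $[n]$. *)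

(* Defs.v *)
From HB Require Import structures.
From mathcomp Require Import all_boot all_order all_algebra.
From mathcomp Require Import all_classical all_reals all_analysis.
Set Implicit Arguments. Unset Strict Implicit. Unset Printing Implicit Defensive.
Import Order.TTheory GRing.Theory Num.Theory.
Import numFieldNormedType.Exports.
Local Open Scope ring_scope.

Section Opinions.
Variable R : realType.

Definition dotv (d : nat) (u v : 'rV[R]_d) : R := \sum_(k < d) u 0 k * v 0 k.

Definition enorm (d : nat) (u : 'rV[R]_d) : R := Num.sqrt (dotv u u).

Definition config (n d : nat) := 'I_n -> 'rV[R]_d.

Definition on_sphere (n d : nat) (U : config n d) : Prop :=
  forall k, dotv (U k) (U k) = 1.

Definition gram (n d : nat) (U : config n d) (i j : 'I_n) : R := dotv (U i) (U j).

(* f : [-1,1] -> R, modelled as R -> R; only values on [-1,1] matter *)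
Definition stable (f : R -> R) : Prop :=
  {within [set x : R | -1 <= x <= 1], continuous f}%classic /\
  (forall A : R, -1 <= A <= 1 -> Num.sg (f A) = Num.sg A).

(* V is obtained from U by the interaction (i,j), i <> j:
   u_i is replaced by w/||w|| with w = u_i + f(A_ij) u_j (w <> 0 so that
   the update is defined). *)
Definition interaction (f : R -> R) (n d : nat) (U V : config n d)
  (i j : 'I_n) : Prop :=
  let w := U i + f (gram U i j) *: U j in
  i != j /\ w != 0 /\
  (forall k, V k = if k == i then (enorm w)^-1 *: w else U k).

Definition single_interaction (f : R -> R) (n d : nat) (U V : config n d) : Prop :=
  exists i j, interaction f U V i j.

Definition inactive (eps : R) (n d : nat) (U : config n d) : Prop :=
  forall i j, `|gram U i j| <= eps \/ 1 - eps <= `|gram U i j|.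

Definition is_cluster (eps : R) (n d : nat) (U : config n d) (C : {set 'I_n}) : Prop :=
  C != finset.set0 /\
  (forall i j, i \in C -> j \in C -> 1 - eps <= `|gram U i j|) /\
  (forall i j, i \in C -> j \notin C -> `|gram U i j| <= eps).

End Opinions.

(* Main.v *)
Require Import Defs.
From HB Require Import structures.
From mathcomp Require Import all_boot all_order all_algebra.
From mathcomp Require Import all_classical all_reals all_analysis.
From mathcomp Require Import lra ring.
Import Order.TTheory GRing.Theory Num.Theory.
Local Open Scope ring_scope.

Lemma dotvC {R : realType} {d} (u v : 'rV[R]_d) : dotv u v = dotv v u.
Proof. by apply: eq_bigr => k _; rewrite mulrC. Qed.

Lemma dotvDl {R : realType} {d} (u v w : 'rV[R]_d) : dotv (u + v) w = dotv u w + dotv v w.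
Proof. by rewrite /dotv -big_split; apply: eq_bigr => k _; rewrite mxE mulrDl. Qed.

Lemma dotvZl {R : realType} {d} (a : R) (u w : 'rV[R]_d) : dotv (a *: u) w = a * dotv u w.
Proof. by rewrite /dotv mulr_sumr; apply: eq_bigr => k _; rewrite mxE mulrA. Qed.

Lemma dotvDr {R : realType} {d} (u v w : 'rV[R]_d) : dotv w (u + v) = dotv w u + dotv w v.
Proof. by rewrite dotvC dotvDl !(dotvC w). Qed.

Lemma dotvZr {R : realType} {d} (a : R) (u w : 'rV[R]_d) : dotv w (a *: u) = a * dotv w u.
Proof. by rewrite dotvC dotvZl dotvC. Qed.

Lemma dotv_ge0 {R : realType} {d} (u : 'rV[R]_d) : 0 <= dotv u u.
Proof. by apply: sumr_ge0 => k _; rewrite -expr2 sqr_ge0. Qed.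

Lemma dotv_eq0 {R : realType} {d} (u : 'rV[R]_d) : dotv u u = 0 -> u = 0.
Proof.
move=> /eqP; rewrite psumr_eq0 => [/allP h|k _]; last by rewrite -expr2 sqr_ge0.
apply/rowP => k; rewrite mxE.
have := h k (mem_index_enum k); rewrite /= mulf_eq0 orbb => /eqP //.
Qed.

Lemma CS1 {R : realType} {d} (u v : 'rV[R]_d) : dotv u u = 1 -> (dotv v u)^+2 <= dotv v v.
Proof.
move=> hu; have := dotv_ge0 (v + (- dotv v u) *: u).
rewrite !(dotvDl, dotvDr, dotvZl, dotvZr) hu (dotvC u v).
set B := dotv v u; set A := dotv v v. move=> h.
nra.
Qed.
Lemma sq_le_sq {R : realType} {p q : R} : 0 <= q -> `|p| <= q -> p^+2 <= q^+2.
Proof. move=> q0 h; rewrite -real_normK ?num_real // lerXn2r ?nnegrE //. Qed.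

Lemma scalar_B (R : realType) (eps0 eps s t a x r : R) :
  0 < eps0 -> eps0 <= 1/256 -> 0 < eps -> eps <= eps0^+2/64 ->
  s^+2 = 1 -> 0 <= t -> 1 - eps <= s*a -> s*a <= 1 -> r^+2 <= 2 - 2*s*a ->
  (`|x| <= eps -> (x + (t*s)*(s*x+r))^+2 <= eps0^+2 * (1 + 2*(t*s)*a + (t*s)^+2)) /\
  (1 - eps <= `|x| -> (1 - eps0)^+2 * (1 + 2*(t*s)*a + (t*s)^+2) <= (x + (t*s)*(s*x+r))^+2).
Proof.
move=> e0 e0s e1 e1s hs ht hsa1 hsa2 hr.
have hnum : x + (t*s)*(s*x+r) = (1+t)*x + t*(s*r).
  by rewrite mulrDr !mulrA -(mulrA t s s) -expr2 hs mulr1; ring.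
have hD : 1 + 2*(t*s)*a + (t*s)^+2 = 1 + 2*t*(s*a) + t^+2.
  by rewrite exprMn hs mulr1 !mulrA.
rewrite hnum hD.
have hsr : `|s*r| = `|r|.
  have hs1 : `|s| = 1.
    by apply/eqP; rewrite -sqrp_eq1 ?normr_ge0 // real_normK ?num_real // hs.
  by rewrite normrM hs1 mul1r.
have hr4 : `|r| <= eps0/4.
  rewrite -(ler_pXn2r (n:=2)) ?nnegrE ?normr_ge0 //; last lra.
  rewrite real_normK ?num_real //. nra.
have hr0 := normr_ge0 r.
split=> hx.
- have hn : `|(1+t)*x + t*(s*r)| <= (1+t)*(eps0/2).
    apply: le_trans (ler_normD _ _) _. rewrite [`|t * _|]normrM hsr [`|(1+t)*x|]normrM (ger0_norm ht) [`|1+t|]ger0_norm; last lra.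
    have hx0 := normr_ge0 x. have : (1+t) * `|x| <= (1+t)*eps by apply: ler_wpM2l; lra. have : t * `|r| <= (1+t)*(eps0/4) by apply: ler_pM; lra. have : eps <= eps0/4 by nra. nra.
  have h0 : 0 <= (1+t)*(eps0/2) by apply: mulr_ge0; lra.
  have h1 := sq_le_sq h0 hn.
  apply: le_trans h1 _.
  rewrite exprMn.
  have hD4 : (1+t)^+2 / 4 <= 1 + 2*t*(s*a) + t^+2.
    have : t * eps <= t * (1/4) by apply: ler_wpM2l => //; nra.
    have : t * (1 - eps) <= t * (s*a) by apply: ler_wpM2l.
    nra.
  have := ler_wpM2l (sqr_ge0 eps0) hD4. nra.
- have hn : (1+t)*(1 - eps0/2) <= `|(1+t)*x + t*(s*r)|.
    apply: le_trans (lerB_normD _ _). rewrite [`|t * _|]normrM hsr [`|(1+t)*x|]normrM (ger0_norm ht) [`|1+t|]ger0_norm; last lra.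
    have : (1+t)*(1-eps) <= (1+t) * `|x| by apply: ler_wpM2l; lra. have : t * `|r| <= (1+t)*(eps0/4) by apply: ler_pM; lra. have : eps <= eps0/4 by nra. nra.
  have h0 : 0 <= (1+t)*(1 - eps0/2) by apply: mulr_ge0; lra.
  have h1 : ((1+t)*(1 - eps0/2))^+2 <= ((1+t)*x + t*(s*r))^+2.
    rewrite -[X in _ <= X]real_normK ?num_real //. apply: sq_le_sq => //.
    by rewrite (ger0_norm h0).
  apply: le_trans h1. rewrite exprMn.
  have h2 : (1 - eps0)^+2 <= (1 - eps0/2)^+2 by apply: sq_le_sq; [lra| rewrite ger0_norm; lra].
  have h3 : 1 + 2*t*(s*a) + t^+2 <= (1+t)^+2 by nra.
  rewrite mulrC; apply: ler_pM => //; [nra| by rewrite sqr_ge0].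
Qed.
Lemma scalar_S (R : realType) (eps0 eps c a x y : R) :
  0 < eps0 -> eps0 <= 1/256 -> 0 < eps -> eps <= eps0/4 -> `|c| <= eps0/4 ->
  `|a| <= 1 -> `|x| <= 1 -> `|y| <= 1 ->
  (`|x| <= eps -> (x + c*y)^+2 <= eps0^+2 * (1 + 2*c*a + c^+2)) /\
  (1 - eps <= `|x| -> (1 - eps0)^+2 * (1 + 2*c*a + c^+2) <= (x + c*y)^+2).
Proof.
move=> e0 e0s e1 e1s hc ha hx hy.
have hca : `|c * a| <= `|c| by rewrite normrM; apply: ler_piMr.
have hcy : `|c * y| <= `|c| by rewrite normrM; apply: ler_piMr.
have hD1 : 1 - 2 * `|c| <= 1 + 2*c*a + c^+2.
  move: hca; rewrite ler_norml => /andP[h1 h2]; nra.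
have hD2 : 1 + 2*c*a + c^+2 <= (1 + `|c|)^+2.
  have hcc : c^+2 = `|c|^+2 by rewrite real_normK ?num_real.
  move: hca; rewrite ler_norml => /andP[h1 h2]; rewrite hcc; nra.
split=> hxe.
- have hn : `|x + c*y| <= eps0/2.
    apply: le_trans (ler_normD _ _) _. lra.
  have : (x + c*y)^+2 <= (eps0/2)^+2.
    rewrite -real_normK ?num_real //. rewrite lerXn2r ?nnegrE ?normr_ge0 //. lra.
  have hc0 := normr_ge0 c. nra.
- have hn : 1 - eps0/2 <= `|x + c*y|.
    have := lerB_normD x (c*y). lra.
  have : (1 - eps0/2)^+2 <= (x + c*y)^+2.
    rewrite -[(x + c*y)^+2]real_normK ?num_real //. rewrite lerXn2r ?nnegrE ?normr_ge0 //. lra.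
  move=> h3; have hc0 := normr_ge0 c.
  have h1 : (1 + `|c|)^+2 <= (1 + eps0/4)^+2 by rewrite lerXn2r ?nnegrE; lra.
  have h2 : (1 - eps0)^+2 * (1 + 2*c*a + c^+2) <= (1 - eps0)^+2 * (1 + eps0/4)^+2.
    apply: ler_wpM2l; first by rewrite sqr_ge0. lra.
  apply: le_trans h2 _. rewrite -exprMn. apply: le_trans h3. rewrite lerXn2r ?nnegrE; nra.
Qed.
Import numFieldNormedType.Exports.
Lemma cont0 {R : realType} (f : R -> R) : stable f -> forall e : R, 0 < e ->
  exists eta : R, 0 < eta /\ forall a, -1 <= a <= 1 -> `|a| < eta -> `|f a| <= e.
Proof.
move=> [hc hs] e e0.
have f0 : f 0 = 0.
  have h : -1 <= (0:R) <= 1 by rewrite oppr_le0 ler01.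
  by have /eqP := hs 0 h; rewrite sgr0 sgr_eq0 => /eqP.
have h0 : ([set x : R | -1 <= x <= 1])%classic 0 by rewrite /= oppr_le0 ler01.
have := (proj1 (@subspace_continuousP _ _ _ f) hc) 0 h0.
move=> /cvgrPdist_le /(_ e e0).
rewrite f0 => /nbhs_ballP [eta eta0 H].
exists eta; split => // a ha1 ha.
have := H a; rewrite sub0r normrN; apply => //. by rewrite /ball /= sub0r normrN.
Qed.
Lemma fin_bounds {R : realType} (g num D eps0 : R) : 0 < D -> g^+2 = num^+2 / D ->
  0 <= eps0 <= 1 ->
  (num^+2 <= eps0^+2 * D -> `|g| <= eps0) /\ ((1-eps0)^+2 * D <= num^+2 -> 1-eps0 <= `|g|).
Proof.
move=> D0 hg /andP[e0 e1]; split=> h.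
- rewrite -(ler_pXn2r (n:=2)) ?nnegrE ?normr_ge0 // real_normK ?num_real // hg.
  by rewrite ler_pdivrMr.
- rewrite -(ler_pXn2r (n:=2)) ?nnegrE ?normr_ge0 ?subr_ge0 // real_normK ?num_real // hg.
  by rewrite ler_pdivlMr.
Qed.

Lemma unit_le1 {R : realType} (p : R) : p^+2 <= 1 -> `|p| <= 1.
Proof.
move=> h; rewrite -(ler_pXn2r (n:=2)) ?nnegrE ?normr_ge0 ?ler01 // real_normK ?num_real // expr1n. exact: h.
Qed.

Lemma keyi {R : realType} (f : R -> R) (eps0 eps eta : R) (n d : nat) (U V : config R n d) (i j k : 'I_n) :
  stable f -> 0 < eps0 -> eps0 <= 1/256 -> 0 < eps -> eps <= eps0^+2/64 -> eps < eta ->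
  (forall a, -1 <= a <= 1 -> `|a| < eta -> `|f a| <= eps0/4) ->
  on_sphere U -> interaction f U V i j ->
  (`|gram U i j| <= eps \/ 1 - eps <= `|gram U i j|) ->
  k != i ->
  (`|gram U i k| <= eps -> `|gram V i k| <= eps0) /\
  (1 - eps <= `|gram U i k| -> 1 - eps0 <= `|gram V i k|).
Proof.
move=> [_ hsg] e0 e0s e1 e1s e1eta Heta hU [hij [hw hV]] hin hki.
set a := gram U i j; set c := f a; set w := U i + c *: U j.
set x := gram U i k; set y := gram U j k.
have hD : dotv w w = 1 + 2*c*a + c^+2.
  rewrite /w !(dotvDl, dotvDr, dotvZl, dotvZr) !hU (dotvC (U j) (U i)) -/(gram U i j) -/a. ring.
have D0 : 0 < dotv w w.
  rewrite lt_def dotv_ge0 andbT; apply/eqP => /dotv_eq0 h; by move: hw; rewrite -/w h eqxx.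
have hg : (gram V i k)^+2 = (x + c*y)^+2 / dotv w w.
  rewrite /gram (hV i) (hV k) eqxx (negbTE hki) -/w dotvZl dotvDl dotvZl -/(gram U i k) -/(gram U j k) -/x -/y.
  by rewrite exprMn exprVn /enorm sqr_sqrtr ?dotv_ge0 // mulrC.
have hx1 : `|x| <= 1 by apply: unit_le1; rewrite /x /gram -(hU i); apply: CS1; rewrite hU.
have hy1 : `|y| <= 1 by apply: unit_le1; rewrite /y /gram -(hU j); apply: CS1; rewrite hU.
have ha1 : `|a| <= 1 by apply: unit_le1; rewrite /a /gram -(hU i); apply: CS1; rewrite hU.
have e01 : 0 <= eps0 <= 1 by apply/andP; split; lra.
have e4 : eps <= eps0/4 by nra.
have [B1 B2] := fin_bounds _ _ _ _ D0 hg e01.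
rewrite hD in B1 B2.
case: hin => [hsmall|hbig].
- have hc : `|c| <= eps0/4.
    apply: Heta; last lra. by rewrite -ler_norml.
  have [S1 S2] := @scalar_S _ _ _ _ _ _ _ e0 e0s e1 e4 hc ha1 hx1 hy1.
  by split => h; [apply: B1; apply: S1 | apply: B2; apply: S2].
- set s := Num.sg a.
  have a0 : a != 0 by apply/eqP => a0; move: hbig; rewrite -/a a0 normr0; lra.
  have hs2 : s^+2 = 1 by rewrite /s sqr_sg a0.
  have hsa : s * a = `|a| by rewrite normrEsg.
  have hsc : Num.sg c = s by rewrite /c hsg // -ler_norml.
  set t := c * s.
  have ht : 0 <= t by rewrite /t -hsc mulrC -normrEsg normr_ge0.
  have hts : t * s = c by rewrite /t -mulrA -expr2 hs2 mulr1.
  set r := y - s * x.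
  have hy : s * x + r = y by rewrite /r; ring.
  have hr : r^+2 <= 2 - 2*s*a.
    have -> : r = dotv (U j + (- s) *: U i) (U k).
      by rewrite dotvDl dotvZl -/(gram U j k) -/(gram U i k) -/x -/y /r mulNr.
    apply: le_trans (CS1 _ _ (hU k)) _.
    rewrite !(dotvDl, dotvDr, dotvZl, dotvZr) !hU (dotvC (U j) (U i)) -/(gram U i j) -/a.
    rewrite -/s. have : s * s = 1 by rewrite -expr2. nra.
  have hsa1 : 1 - eps <= s * a by rewrite hsa -/a.
  have hsa2 : s * a <= 1 by rewrite hsa.
  have [T1 T2] := @scalar_B _ _ _ _ _ _ x _ e0 e0s e1 e1s hs2 ht hsa1 hsa2 hr.
  rewrite hts hy in T1 T2.
  by split => h; [apply: B1; apply: T1 | apply: B2; apply: T2].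
Qed.
Theorem mainTheorem18 (R : realType) (f : R -> R) :
  stable f ->
  forall eps0 : R, 0 < eps0 -> eps0 <= 1 / 256 ->
  exists eps : R, 0 < eps /\
    forall (n d : nat) (U V : config R n d),
      on_sphere U -> single_interaction f U V ->
      inactive eps U ->
      inactive eps0 V /\
      (forall C : {set 'I_n}, is_cluster eps U C <-> is_cluster eps0 V C).
Proof.
move=> hf eps0 e0 e0s.
have e04 : 0 < eps0 / 4 by lra.
have [eta [eta0 Heta]] := @cont0 _ f hf _ e04.
pose eps := Num.min (eps0^+2/64) (eta/2).
have e1 : 0 < eps by rewrite lt_min; apply/andP; split; [apply: divr_gt0 => //; apply: exprn_gt0|lra].
have e1s : eps <= eps0^+2/64 by rewrite ge_min lexx.
have e1eta : eps < eta by rewrite gt_min; apply/orP; right; lra.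
have e4 : eps <= eps0/4 by nra.
exists eps; split => // n d U V hU [i [j hint]] hin.
have hint' := hint; case: hint' => [hij [hw hV]].
have key : forall k l, (`|gram U k l| <= eps -> `|gram V k l| <= eps0) /\
    (1 - eps <= `|gram U k l| -> 1 - eps0 <= `|gram V k l|).
  move=> k l.
  have hUii : forall m, gram U m m = 1 by move=> m; apply: hU.
  case: (eqVneq k i) => [-> | hki]; case: (eqVneq l i) => [-> | hli].
  - have -> : gram V i i = 1.
      rewrite /gram (hV i) eqxx dotvZl dotvZr mulrA -expr2 exprVn /enorm sqr_sqrtr ?dotv_ge0 //.
      apply: mulVf; apply/eqP => /dotv_eq0 h; by move: hw; rewrite h eqxx.
    rewrite hUii normr1; split => h; lra.
  - exact: (@keyi _ f eps0 eps eta n d U V i j l hf e0 e0s e1 e1s e1eta Heta hU hint (hin i j) hli).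
  - rewrite /gram dotvC (dotvC (V k)).
    exact: (@keyi _ f eps0 eps eta n d U V i j k hf e0 e0s e1 e1s e1eta Heta hU hint (hin i j) hki).
  - rewrite /gram (hV k) (hV l) (negbTE hki) (negbTE hli); split => h; lra.
split.
- move=> k l; case: (hin k l) => h; [left; exact: (key k l).1 h | right; exact: (key k l).2 h].
- move=> C; split => [[hC [hin1 hout]] | [hC [hin1 hout]]]; split => //; split.
  + by move=> k l hk hl; apply: (key k l).2; apply: hin1.
  + by move=> k l hk hl; apply: (key k l).1; apply: hout.
  + move=> k l hk hl; case: (hin k l) => // h.
    have := (key k l).1 h; have := hin1 k l hk hl; lra.
  + move=> k l hk hl; case: (hin k l) => // h.
    have := (key k l).2 h; have := hout k l hk hl; lra.
Qed.
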